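(* For every index coding instance $\mathcal{I}=\{(i\mid A_i):i\in[m]\}$, $\beta_{\text{P-UMCD}}(\mathcal{I})\le\beta_{\text{PCC}}(\mathcal{I})$.
   Context: For $M\subseteq[m]$, the subinstance $M$ has receivers $M$ and side information $A_i\cap M$; $\beta_{\text{MDS}}(M)=|M|-\min_{i\in M}|M\cap A_i|$. $\beta_{\text{PCC}}(\mathcal{I})=\min\sum_{j}\beta_{\text{MDS}}(M_j)$ and $\beta_{\text{P-UMCD}}(\mathcal{I})=\min\sum_j\beta_{\text{UMCD}}(M_j)$, both minima over partitions of $[m]$ into pairwise disjoint nonempty sets $M_1,\dots,M_n$. UMCD algorithm on a (sub)instance with receiver set $V$: $B_i=V\setminus(A_i\cup\{i\})$ (side information taken within $V$); for a $0/1$ matrix $\boldsymbol{G}$, $\boldsymbol{G}_{[k]}^L$ is the submatrix of the first $k$ rows and columns $L$, and $\mathrm{mcm}$ is the maximum number of $1$-entries in distinct rows and columns (0 if no columns); $N=V$, $k=0$; while $N\ne\emptyset$: $k\leftarrow k+1$; pick $w\in N$ minimizing $|A_w|$ (arbitrary tie-breaking); row $k$ of $\boldsymbol{G}$ is the indicator of $\{w\}\cup A_w$; remove $w$; remove every $i\in N$ with $\mathrm{mcm}(\boldsymbol{G}_{[k]}^{\{i\}\cup B_i})=\mathrm{mcm}(\boldsymbol{G}_{[k]}^{B_i})+1$; output $\beta_{\text{UMCD}}=k$ (a fixed execution for each subinstance). *)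

(* Defs.v *)
From mathcomp Require Import all_boot.
Unset Printing Implicit Defensive.

Section IC.
Variable m : nat.
Variable A : 'I_m -> {set 'I_m}.

(* beta_MDS(M) = |M| - min_{i in M} |M :&: A i|  (the default #|M| of the
   min is irrelevant for nonempty M, as every |M :&: A i| <= |M|) *)
Definition beta_MDS (M : {set 'I_m}) : nat :=
  #|M| - \big[minn/#|M|]_(i in M) #|M :&: A i|.

Definition is_partition (P : {set {set 'I_m}}) : bool := partition P [set: 'I_m].

Definition beta_PCC : nat :=
  \big[minn/m]_(P : {set {set 'I_m}} | is_partition P) \sum_(M in P) beta_MDS M.

(* A 0/1 matrix with rows given as a sequence of sets (row r = indicator of
   nth set0 G r), columns indexed by 'I_m. *)
Definition is_matching (G : seq {set 'I_m}) (L : {set 'I_m})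
    (S : {set 'I_(size G) * 'I_m}) : bool :=
  [forall p in S, (p.2 \in L) && (p.2 \in (nth (set0 : {set 'I_m}) G p.1))] &&
  [forall p in S, forall q in S, ((p.1 == q.1) || (p.2 == q.2)) ==> (p == q)].

Definition mcm (G : seq {set 'I_m}) (L : {set 'I_m}) : nat :=
  \max_(S : {set 'I_(size G) * 'I_m} | is_matching G L S) #|S|.

(* UMCD on the subinstance with receiver set V (side information A i :&: V) *)
Definition Bset (V : {set 'I_m}) (i : 'I_m) : {set 'I_m} := V :\: (A i :|: [set i]).

Definition umcd_row (V : {set 'I_m}) (w : 'I_m) : {set 'I_m} := w |: (A w :&: V).

Definition umcd_next (V N : {set 'I_m}) (G : seq {set 'I_m}) (w : 'I_m) : {set 'I_m} :=
  let G' := rcons G (umcd_row V w) in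
  let N1 := N :\ w in
  N1 :\: [set i in N1 | mcm G' (i |: Bset V i) == (mcm G' (Bset V i)).+1].

(* umcd_exec V N G k : starting from remaining set N and rows G, some
   execution of the loop (with some admissible tie-breaking) ends with
   output k (the final number of rows). *)
Inductive umcd_exec (V : {set 'I_m}) : {set 'I_m} -> seq {set 'I_m} -> nat -> Prop :=
| umcd_done G : umcd_exec V set0 G (size G)
| umcd_step N G w k :
    N != set0 -> w \in N ->
    (forall u, u \in N -> #|A w :&: V| <= #|A u :&: V|) ->
    umcd_exec V (umcd_next V N G w) (rcons G (umcd_row V w)) k ->
    umcd_exec V N G k.

Definition umcd_output (V : {set 'I_m}) (k : nat) : Prop := umcd_exec V V [::] k.

Definition beta_PUMCD (b : {set 'I_m} -> nat) : nat :=
  \big[minn/m]_(P : {set {set 'I_m}} | is_partition P) \sum_(M in P) b M.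

End IC.

(* Main.v *)
Require Import Defs.
From mathcomp Require Import all_boot all_order zify.
Set Implicit Arguments. Unset Strict Implicit.

Lemma bigmin_le (I : finType) (P : pred I) (F : I -> nat) x j :
  P j -> \big[minn/x]_(i | P i) F i <= F j.
Proof. move=> Pj; have := @Order.TotalTheory.bigmin_le_cond _ nat I x j P F Pj. by rewrite minEnat. Qed.

Section Hall.
Variables (R C : finType).
Definition nbh (e : R -> C -> bool) (X : {set R}) : {set C} := [set c | [exists r in X, e r c]].
Definition hallc e (X0 : {set R}) := forall X : {set R}, X \subset X0 -> #|X| <= #|nbh e X|.
Definition matchf e (X0 : {set R}) (f : R -> option C) :=
  {in X0 &, injective f} /\ (forall r, r \in X0 -> exists2 c, f r = Some c & e r c).

Lemma hall_gen k : forall (e : R -> C -> bool) (X0 : {set R}), #|X0| <= k -> hallc e X0 -> exists f, matchf e X0 f.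
Proof.
elim: k => [|k IH] e X0 hk hH.
  exists (fun _ => None).
  have X0e : X0 = set0 by apply/eqP; rewrite -cards_eq0; lia.
  by split => [r1 r2|r]; rewrite X0e inE.
case: (leqP #|X0| k) => hk'; first exact: IH.
case: (boolP [exists X : {set R}, [&& X \subset X0, X != set0, X != X0 & #|nbh e X| <= #|X|]]).
  case/existsP => X /and4P [sX nX pX tX].
  have cX : #|X| < #|X0| by rewrite proper_card // properEneq sX pX.
  have [f1 [i1 h1]] : exists f, matchf e X f.
    apply: IH; first lia. move=> Y sY; apply: hH; exact: subset_trans sY sX.
  pose e2 := fun r c => e r c && (c \notin nbh e X).
  have [f2 [i2 h2]] : exists f, matchf e2 (X0 :\: X) f.
    apply: IH.
      rewrite cardsD (setIidPr sX). have := card_gt0 X; rewrite nX. lia.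
    move=> Y sY.
    have sYX0 : Y \subset X0 by apply: subset_trans sY (subsetDl _ _).
    have hYX := hH (Y :|: X) ltac:(by rewrite subUset sYX0 sX).
    have dj : Y :&: X = set0.
      apply/eqP; rewrite -subset0; apply/subsetP => r; rewrite !inE => /andP [rY rX].
      by move/subsetP: sY => /(_ r rY); rewrite !inE rX.
    have cU : #|Y :|: X| = #|Y| + #|X| by rewrite cardsU dj cards0 subn0.
    have sN : nbh e (Y :|: X) \subset nbh e2 Y :|: nbh e X.
      apply/subsetP => c; rewrite inE => /existsP [r /andP [rYX erc]].
      rewrite in_setU; case: (boolP (c \in nbh e X)) => cN; first by rewrite orbT.
      rewrite orbF inE; apply/existsP; exists r.
      move: rYX; rewrite inE => /orP [rY|rX]; first by rewrite rY /e2 erc cN.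
      by move: cN; rewrite inE; move/existsP; case; exists r; rewrite rX.
    have := subset_leq_card sN; rewrite cardsU. lia.
  exists (fun r => if r \in X then f1 r else f2 r); split.
    move=> r1 r2 hr1 hr2 /=.
    case: (boolP (r1 \in X)) => x1; case: (boolP (r2 \in X)) => x2.
    - exact: i1.
    - have [c1 e1 ee1] := h1 r1 x1. have [c2 e2' /andP [_ ee2]] := h2 r2 ltac:(by rewrite inE x2 hr2).
      rewrite e1 e2' => [[eq]]; move: ee2; rewrite -eq inE; case/negP.
      by apply/existsP; exists r1; rewrite x1 ee1.
    - have [c1 e1 ee1] := h1 r2 x2. have [c2 e2' /andP [_ ee2]] := h2 r1 ltac:(by rewrite inE x1 hr1).
      rewrite e1 e2' => [[eq]]; move: ee2; rewrite eq inE; case/negP.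
      by apply/existsP; exists r2; rewrite x2 ee1.
    - by apply: i2; rewrite inE ?x1 ?x2 ?hr1 ?hr2.
  move=> r hr /=; case: ifP => x; first exact: h1.
  have [c fc /andP [ec _]] := h2 r ltac:(by rewrite inE x hr).
  by exists c.
move=> hno.
have : X0 != set0 by rewrite -card_gt0; lia.
case/set0Pn => r0 hr0.
have : 0 < #|nbh e [set r0]| by have := hH [set r0]; rewrite sub1set hr0 cards1; apply.
rewrite card_gt0; case/set0Pn => c0; rewrite inE => /existsP [? /andP [/set1P -> erc0]].
pose e2 := fun r c => e r c && (c != c0).
have [f2 [i2 h2]] : exists f, matchf e2 (X0 :\ r0) f.
  apply: IH. have := cardsD1 r0 X0; rewrite hr0 /=. lia.
  move=> Y sY.
  case: (eqVneq Y set0) => [->|nY]; first by rewrite cards0.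
  have sYX0 : Y \subset X0 by apply: subset_trans sY (subsetDl _ _).
  have r0Y : r0 \notin Y by apply/negP => /(subsetP sY); rewrite !inE eqxx.
  have nYX : Y != X0 by apply/eqP => YX; move: r0Y; rewrite YX hr0.
  have := existsPn hno Y; rewrite sYX0 nY nYX /= -ltnNge => lt.
  have sN : nbh e Y \subset c0 |: nbh e2 Y.
    apply/subsetP => c; rewrite !inE => /existsP [r /andP [rY erc]].
    case: (eqVneq c c0) => //= ne; apply/existsP; exists r; by rewrite rY /e2 erc ne.
  have := subset_leq_card sN; rewrite cardsU1. lia.
exists (fun r => if r == r0 then Some c0 else f2 r); split.
  move=> r1 r2 hr1 hr2 /=.
  case: (eqVneq r1 r0) => x1; case: (eqVneq r2 r0) => x2.
  - by rewrite x1 x2.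
  - have [c2 e2' /andP [_ ee2]] := h2 r2 ltac:(by rewrite !inE x2 hr2).
    by rewrite e2' => [[eq]]; move: ee2; rewrite eq eqxx.
  - have [c2 e2' /andP [_ ee2]] := h2 r1 ltac:(by rewrite !inE x1 hr1).
    by rewrite e2' => [[eq]]; move: ee2; rewrite eq eqxx.
  - by apply: i2; rewrite !inE ?x1 ?x2 ?hr1 ?hr2.
move=> r hr /=; case: eqVneq => [->|x]; first by exists c0.
have [c fc /andP [ec _]] := h2 r ltac:(by rewrite !inE x hr).
by exists c.
Qed.
End Hall.
Section M.
Variable m : nat.
Implicit Types (G : seq {set 'I_m}) (L : {set 'I_m}).

Lemma matchingP G L (S : {set 'I_(size G) * 'I_m}) :
  is_matching m G L S <->
  ((forall p, p \in S -> (p.2 \in L) && (p.2 \in nth set0 G p.1)) /\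
   (forall p q, p \in S -> q \in S -> (p.1 == q.1) || (p.2 == q.2) -> p = q)).
Proof.
rewrite /is_matching; split.
  case/andP => /forall_inP h1 /forall_inP h2; split => //.
  by move=> p q pS qS e; apply/eqP; move: (h2 p pS) => /forall_inP /(_ q qS) /implyP; apply.
case=> h1 h2; apply/andP; split; first by apply/forall_inP.
apply/forall_inP => p pS; apply/forall_inP => q qS; apply/implyP => e.
by rewrite (h2 p q pS qS e).
Qed.

Lemma mcm_attain G L : exists2 S, is_matching m G L S & #|S| = mcm m G L.
Proof.
have h : 0 < #|[pred S : {set 'I_(size G) * 'I_m} | is_matching m G L S]|.
  apply/card_gt0P; exists set0; rewrite inE; apply/matchingP; split => p; by rewrite inE.
have [S hS e] := eq_bigmax_cond (fun S : {set 'I_(size G) * 'I_m} => #|S|) h.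
exists S; first by move: hS; rewrite inE.
by rewrite /mcm e.
Qed.

Lemma matching_le G L S : is_matching m G L S -> #|S| <= mcm m G L.
Proof. move=> h; exact: (@leq_bigmax_cond _ (fun S => is_matching m G L S) (fun S => #|S|) S h). Qed.

Definition NL G L (X : {set 'I_(size G)}) := L :&: \bigcup_(j in X) nth set0 G j.

Lemma mcm_easy G L (X : {set 'I_(size G)}) : mcm m G L + #|X| <= size G + #|NL L X|.
Proof.
have [S /matchingP [h1 h2] <-] := mcm_attain G L.
pose B := [set p : 'I_(size G) * 'I_m | p.1 \in X].
have eS := cardsID B S.
have c1 : #|S :&: B| <= #|NL L X|.
  rewrite -(@card_in_imset _ _ (fun p => p.2)).
    apply: subset_leq_card; apply/subsetP => c /imsetP [p]; rewrite !inE => /andP [pS pX] ->.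
    case/andP: (h1 p pS) => -> /= pG. by apply/bigcupP; exists p.1.
  move=> p q; rewrite !inE => /andP [pS _] /andP [qS _] e; apply: h2 => //; by rewrite e eqxx orbT.
have c2 : #|S :\: B| <= #|~: X|.
  rewrite -(@card_in_imset _ _ (fun p => p.1)).
    apply: subset_leq_card; apply/subsetP => c /imsetP [p]; rewrite !inE => /andP [pX pS] ->.
    exact: pX.
  move=> p q; rewrite !inE => /andP [_ pS] /andP [_ qS] e; apply: h2 => //; by rewrite e eqxx.
have hc := cardsC X; rewrite card_ord in hc.
set a := #|S :&: B| in eS c1 *. set b := #|S :\: B| in eS c2 *. set x := #|X| in hc *. set y := #|~: X| in c2 hc. set s := #|S| in eS *. lia.
Qed.

Lemma mcm_hall G L n : (forall X : {set 'I_(size G)}, #|X| <= #|NL L X| + n) -> size G <= mcm m G L + n.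
Proof.
move=> hX.
pose e := fun (r : 'I_(size G)) (c : 'I_m + 'I_n) =>
  match c with inl c => (c \in L) && (c \in nth set0 G r) | inr _ => true end.
have hH : hallc e setT.
  move=> X _; case: (eqVneq X set0) => [->|nX]; first by rewrite cards0.
  case/set0Pn: nX => r0 r0X.
  have s : (inl @: NL L X) :|: (inr @: [set: 'I_n]) \subset nbh e X.
    apply/subsetP => c; rewrite in_setU => /orP [] /imsetP [x xin ->]; rewrite inE.
      move: xin; rewrite inE => /andP [xL /bigcupP [r rX xr]].
      by apply/existsP; exists r; rewrite rX /= xL.
    by apply/existsP; exists r0; rewrite r0X.
  have dj : (inl @: NL L X) :&: (inr @: [set: 'I_n]) = set0.
    apply/eqP; rewrite -subset0; apply/subsetP => c; rewrite inE => /andP [/imsetP [x _ ->] /imsetP [y _]] //.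
  have := subset_leq_card s; rewrite cardsU dj cards0 subn0 !card_imset; try (exact: inl_inj || exact: inr_inj).
  rewrite cardsT card_ord => h; have h2 := hX X; set a := #|NL L X| in h h2. set x := #|X| in h2 *. set z := #|nbh e X| in h *. lia.
have [f [fi fh]] := @hall_gen _ _ #|[set: 'I_(size G)]| e setT (leqnn _) hH.
pose S := [set p : 'I_(size G) * 'I_m | f p.1 == Some (inl p.2)].
have mS : is_matching m G L S.
  apply/matchingP; split.
    move=> p; rewrite inE => /eqP fp. have [c fc ec] := fh p.1 (in_setT _).
    by move: ec; rewrite fp in fc; case: fc => <-.
  move=> [p1 p2] [q1 q2]; rewrite !inE /= => /eqP fp /eqP fq /orP [/eqP e1|/eqP e2].
    by move: fp; rewrite e1 fq => [[->]].
  have e1 : p1 = q1 by apply: fi; rewrite ?in_setT // fp fq e2.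
  by rewrite e1 e2.
have hS := matching_le mS.
pose R1 := [set r : 'I_(size G) | [exists c, f r == Some (inl c)]].
have c1 : #|R1| <= #|S|.
  apply: leq_trans (leq_imset_card (fun p => p.1) S); apply: subset_leq_card.
  apply/subsetP => r; rewrite inE => /existsP [c fc]; apply/imsetP; exists (r, c) => //.
  by rewrite inE.
have c2 : #|~: R1| <= n.
  rewrite -(@card_in_imset _ _ f); last by move=> x y _ _; apply: fi; rewrite in_setT.
  have hn : #|[set (Some (inr j) : option ('I_m + 'I_n)) | j in [set: 'I_n]]| = n.
    by rewrite card_imset ?cardsT ?card_ord // => x y [].
  rewrite -[X in _ <= X]hn; apply: subset_leq_card; apply/subsetP => c /imsetP [r]; rewrite !inE => hr ->.
  have [c' fc' _] := fh r (in_setT _); rewrite fc'.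
  case: c' fc' => [c'|j] fc'.
    by move: hr; case/negP; apply/existsP; exists c'; rewrite fc'.
  by apply/imsetP; exists j.
have hc := cardsC R1; rewrite card_ord in hc.
set a := #|R1| in c1 hc. set b := #|~: R1| in c2 hc. set s := #|S| in c1 hS. lia.
Qed.

Lemma mcm_add1 G L w : mcm m G (w |: L) <= (mcm m G L).+1.
Proof.
have [S /matchingP [h1 h2] <-] := mcm_attain G (w |: L).
pose B := [set p : 'I_(size G) * 'I_m | p.2 != w].
have eS := cardsID B S.
have m1 : is_matching m G L (S :&: B).
  apply/matchingP; split.
    move=> p; rewrite !inE => /andP [pS pw]; have := h1 p pS; rewrite !inE (negbTE pw) /=. done.
  move=> p q; rewrite !inE => /andP [pS _] /andP [qS _]; exact: h2.
have := matching_le m1.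
have : #|S :\: B| <= 1.
  apply/card_le1_eqP => p q; rewrite !inE => /andP [/negPn /eqP pw pS] /andP [/negPn /eqP qw qS].
  apply: h2 => //; by rewrite pw qw eqxx orbT.
move=> h3 h4. set a := #|S :&: B| in eS h4. set b := #|S :\: B| in eS h3. set s := #|S| in eS *. lia.
Qed.
End M.

Lemma ar1 mu y K ny nw : mu + y <= K + ny -> nw = 1 + ny -> nw + (K - mu - 1) < y -> False.
Proof. lia. Qed.
Lemma ar2 mu y K ny nw u nu x z nx I a d W : mu < K -> mu + y <= K + ny -> nw = 0 + ny ->
  mu + u <= K + nu -> u = y + x - z -> nu = ny + nx - I -> nw + (K - mu - 1) < y ->
  nx + a + 1 = W -> W <= x + d -> d <= a -> z <= x -> I <= ny -> (z = 0 \/ z + d <= I + a) -> False.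
Proof. lia. Qed.
Lemma ar3 mu K q : mu < K -> K <= q + (K - mu - 1) -> mu.+1 <= q.
Proof. lia. Qed.

Lemma ar4 x d U : x + d < U -> 1 + x + d <= U.
Proof. lia. Qed.
Lemma ar5 d a : d <= a -> 1 + 0 + d <= a + 1.
Proof. lia. Qed.

Section Main.
Variable m : nat.
Variable A : 'I_m -> {set 'I_m}.
Hypothesis hA : forall i, i \notin A i.
Variable V : {set 'I_m}.
Variable d : nat.

Definition Un (G : seq {set 'I_m}) n (X : {set 'I_n}) : {set 'I_m} := \bigcup_(j in X) nth set0 G j.

Definition UP G := forall n (X : {set 'I_n}), X != set0 -> (forall j, j \in X -> j < size G) ->
  #|X| + d <= #|Un G X|.

Lemma wid_inj n K (h : n <= K) : injective (widen_ord h).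
Proof. move=> x y e; apply: val_inj; exact: (congr1 val e). Qed.

Lemma shrink n K (X : {set 'I_n}) (F : nat -> {set 'I_m}) :
  (forall j, j \in X -> j < K) ->
  exists X' : {set 'I_K}, #|X'| = #|X| /\ \bigcup_(j in X') F j = \bigcup_(j in X) F j.
Proof.
move=> hX; case: (leqP n K) => h.
  exists (widen_ord h @: X); split; first by rewrite card_imset //; exact: wid_inj.
  rewrite big_imset //; move=> x y _ _; exact: wid_inj.
have hw : K <= n by apply: ltnW.
exists [set j : 'I_K | widen_ord hw j \in X].
have eX : X = widen_ord hw @: [set j : 'I_K | widen_ord hw j \in X].
  apply/setP => j; apply/idP/imsetP => [jX|[i]]; last by rewrite inE => iX ->.
  exists (Ordinal (hX j jX)); last by apply: val_inj.
  by rewrite inE; have -> : widen_ord hw (Ordinal (hX j jX)) = j by apply: val_inj.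
split; first by rewrite [in RHS]eX card_imset //; exact: wid_inj.
rewrite [in RHS]eX big_imset //; move=> x y _ _; exact: wid_inj.
Qed.

Lemma key G w (X1 : {set 'I_(size G)}) :
  UP G -> (forall j, nth set0 G j \subset V) -> w \in V -> d <= #|A w :&: V| -> X1 != set0 ->
  umcd_row m A V w \subset Un G X1 -> #|Un G X1| <= #|X1| + d ->
  mcm m G (w |: Bset m A V w) == (mcm m G (Bset m A V w)).+1.
Proof.
move=> up sub wV dw nX1 rW cW.
set L := Bset m A V w.
have wL : w \notin L by rewrite !inE eqxx orbT.
have UV : forall n (Y : {set 'I_n}), Un G Y \subset V.
  move=> n Y; apply/subsetP => c /bigcupP [j _ cj]; exact: (subsetP (sub j)).
have eW : Un G X1 :\: L = umcd_row m A V w.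
  apply/setP => c; rewrite /L /Bset /umcd_row !inE.
  case: (eqVneq c w) => [->|cw] /=.
    rewrite orbT /=; apply: (subsetP rW); by rewrite !inE eqxx.
  rewrite orbF; case: (boolP (c \in Un G X1)) => cU; last first.
    rewrite andbF; apply/esym/negP => /andP [cA cV]; move: cU; case/negP; apply: (subsetP rW).
    by rewrite !inE cA cV orbT.
  by rewrite (subsetP (UV _ X1) c cU) andbT; case: (c \in A w).
set a := #|A w :&: V|.
have cr : #|umcd_row m A V w| = a + 1.
  rewrite /umcd_row cardsU1 !inE (negbTE (hA w)) /= addnC. done.
have hLW : #|NL L X1| + a + 1 = #|Un G X1|.
  have := cardsID L (Un G X1); rewrite eW cr setIC.
  rewrite /NL /Un => <-. lia.
set K := size G. set mu := mcm m G L.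
have e1 := mcm_easy L X1.
have muK : mu < K.
  move: e1; rewrite -/mu -/K. set x := #|X1|. set nx := #|NL L X1|. set W := #|Un G X1| in hLW cW.
  lia.
have hall : forall Y : {set 'I_(size G)}, #|Y| <= #|NL (w |: L) Y| + (K - mu - 1).
  move=> Y; rewrite leqNgt; apply/negP => hY.
  have F1 := mcm_easy L Y.
  have F2 : #|NL (w |: L) Y| = (w \in Un G Y) + #|NL L Y|.
    case: (boolP (w \in Un G Y)) => wU.
      have -> : NL (w |: L) Y = w |: NL L Y.
        by apply/setP => c; rewrite /NL !(in_setI, in_setU1); case: eqVneq => [->|] //=; rewrite wU.
      by rewrite cardsU1 /NL in_setI (negbTE wL).
    suff -> : NL (w |: L) Y = NL L Y by [].
    apply/setP => c; rewrite /NL !(in_setI, in_setU1); case: eqVneq => [->|] //=.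
    by rewrite (negbTE wL) (negbTE wU).
  have F3 := mcm_easy L (Y :|: X1).
  have F4 := cardsU Y X1.
  have F5 : NL L (Y :|: X1) = NL L Y :|: NL L X1 by rewrite /NL bigcup_setU setIUr.
  have F5' := cardsU (NL L Y) (NL L X1).
  have F7 : Y :&: X1 != set0 -> #|Y :&: X1| + d <= #|NL L Y :&: NL L X1| + a.
    move=> nZ.
    have h1 := up _ (Y :&: X1) nZ (fun j _ => ltn_ord j).
    apply: leq_trans h1 _.
    have s : Un G (Y :&: X1) \subset (NL L Y :&: NL L X1) :|: (A w :&: V).
      apply/subsetP => c /bigcupP [j]; rewrite inE => /andP [jY jX] cj.
      have cV : c \in V by apply: (subsetP (sub j)).
      have cUY : c \in Un G Y by apply/bigcupP; exists j.
      have cUX : c \in Un G X1 by apply/bigcupP; exists j.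
      case: (boolP (c \in L)) => cL.
        by rewrite in_setU /NL !in_setI cL cUY cUX.
      have : c \in Un G X1 :\: L by rewrite in_setD cL cUX.
      rewrite eW /umcd_row in_setU1 => /orP [/eqP cw|cA]; last by rewrite in_setU cA orbT.
      exfalso; rewrite cw in cUY; rewrite cUY in F2; exact: ar1 F1 F2 hY.
    apply: leq_trans (subset_leq_card s) _; rewrite cardsU; apply: leq_subr.
  have zx : #|Y :&: X1| <= #|X1| := subset_leq_card (subsetIr _ _).
  have Iy : #|NL L Y :&: NL L X1| <= #|NL L Y| := subset_leq_card (subsetIl _ _).
  rewrite F5 in F3.
  case: (boolP (w \in Un G Y)) F2 => wU F2; first exact: (ar1 F1 F2 hY).
  have Hz : #|Y :&: X1| = 0 \/ #|Y :&: X1| + d <= #|NL L Y :&: NL L X1| + a.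
    case: (eqVneq (Y :&: X1) set0) => [Ze|nZ]; [left; by rewrite Ze cards0 | right; exact: F7].
  exact: (ar2 muK F1 F2 F3 F4 F5' hY hLW cW dw zx Iy Hz).
have h := mcm_hall hall.
have h2 := mcm_add1 G L w.
rewrite eqn_leq h2 /=. exact: ar3 muK h.
Qed.
Lemma up_step G w : UP G -> (forall j, nth set0 G j \subset V) -> w \in V -> d <= #|A w :&: V| ->
  (G != [::] -> ~~ (mcm m G (w |: Bset m A V w) == (mcm m G (Bset m A V w)).+1)) ->
  UP (rcons G (umcd_row m A V w)).
Proof.
move=> up sub wV dw nr n X nX hX.
set r := umcd_row m A V w.
have cr : #|r| = #|A w :&: V| + 1.
  rewrite /r /umcd_row cardsU1 in_setI (negbTE (hA w)) /= addnC. done.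
rewrite size_rcons in hX.
case: (boolP [exists j in X, val j == size G]); last first.
  move/existsPn => hn.
  have hX' : forall j, j \in X -> j < size G.
    move=> j jX; have := hX j jX; have := hn j; rewrite jX /= ltnS leq_eqVlt => /negbTE ->. done.
  have -> : Un (rcons G r) X = Un G X.
    apply: eq_bigr => j jX; by rewrite nth_rcons hX'.
  exact: up.
case/existsP => j0 /andP [j0X /eqP j0K].
set X1 := X :\ j0.
have hX1 : forall j, j \in X1 -> j < size G.
  move=> j; rewrite in_setD1 => /andP [jj0 jX].
  have := hX j jX; rewrite ltnS leq_eqVlt => /orP [/eqP e|] //.
  by move: jj0; rewrite (_ : j = j0) ?eqxx //; apply: val_inj; rewrite /= e j0K.
have eU : Un (rcons G r) X = r :|: Un G X1.
  rewrite /Un (big_setD1 _ j0X) /= nth_rcons j0K ltnn eqxx; congr (_ :|: _).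
  apply: eq_bigr => j jX; by rewrite nth_rcons hX1.
have cX := cardsD1 j0 X; rewrite j0X /= -/X1 in cX.
rewrite eU cX.
case: (eqVneq X1 set0) => [X1e|nX1].
  rewrite X1e cards0 /Un big_set0 setU0 cr. exact: ar5 dw.
have u1 := up _ X1 nX1 hX1.
case: (leqP #|Un G X1| (#|X1| + d)) => hc; last first.
  apply: leq_trans _ (subset_leq_card (subsetUr r _)). exact: ar4 hc.
case: (boolP (r \subset Un G X1)) => hs; last first.
  case/subsetPn: hs => c cr' cU.
  have : #|c |: Un G X1| <= #|r :|: Un G X1|.
    apply: subset_leq_card; apply/subsetP => x; rewrite in_setU1 in_setU => /orP [/eqP ->|->]; last by rewrite orbT.
    by rewrite cr'.
  rewrite cardsU1 cU. move=> h; apply: leq_trans h. rewrite add1n ltnS. exact: u1.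
exfalso.
have [Xs [cXs eXs]] := shrink (fun j => nth set0 G j) hX1.
have GN : G != [::].
  case/set0Pn: nX1 => j jX; apply/eqP => G0; have := hX1 j jX; by rewrite G0.
have := key up sub wV dw (X1 := Xs).
rewrite /Un eXs cXs -/(Un G X1) => h.
move/negP: (nr GN); apply; apply: h => //.
by rewrite -card_gt0 cXs card_gt0.
Qed.

Definition Inv (N : {set 'I_m}) (G : seq {set 'I_m}) := [/\ N \subset V, forall j, nth set0 G j \subset V, UP G &
  forall u, u \in N -> G != [::] -> ~~ (mcm m G (u |: Bset m A V u) == (mcm m G (Bset m A V u)).+1)].

Lemma exec_bound N G k : umcd_exec m A V N G k -> (forall u, u \in V -> d <= #|A u :&: V|) -> Inv N G ->
  exists G', [/\ size G' = k, forall j, nth set0 G' j \subset V & UP G'].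
Proof.
move=> ex hd; elim: ex => {N G k} [G|N G w k nN wN hmin ex IH] [sN sG uG nG].
  by exists G.
apply: IH.
have wV : w \in V by apply: (subsetP sN).
split.
- apply: subset_trans sN; rewrite /umcd_next; apply: subset_trans (subsetDl _ _) _; exact: subsetDl.
- move=> j; rewrite nth_rcons; case: ifP => _; first exact: sG.
  case: ifP => _; last exact: sub0set.
  by rewrite /umcd_row subUset sub1set wV subsetIr.
- apply: up_step => //; [exact: hd | exact: nG].
- move=> u; rewrite /umcd_next in_setD => /andP [hu hN1] _.
  by move: hu; rewrite inE hN1.
Qed.
Lemma umcd_bound k : (forall u, u \in V -> d <= #|A u :&: V|) -> V != set0 ->
  umcd_output m A V k -> k + d <= #|V|.
Proof.
move=> hd nV ex.
have init : Inv V [::].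
  split => //.
  - by move=> j; rewrite nth_nil sub0set.
  - by move=> n X nX hX; case/set0Pn: nX => j jX; have := hX j jX.
have [G' [sz sG uG]] := exec_bound ex hd init.
case: (posnP k) => [k0|kp].
  case/set0Pn: nV => u uV; rewrite k0 add0n.
  exact: leq_trans (hd u uV) (subset_leq_card (subsetIr _ _)).
have nT : [set: 'I_(size G')] != set0 by rewrite -card_gt0 cardsT card_ord sz.
have := uG _ [set: 'I_(size G')] nT (fun j _ => ltn_ord j).
rewrite cardsT card_ord sz => h; apply: leq_trans h _; apply: subset_leq_card.
apply/subsetP => c /bigcupP [j _ cj]; exact: (subsetP (sG j)).
Qed.
End Main.

Lemma ar6 k dd v : k + dd <= v -> k <= v - dd.
Proof. lia. Qed.

Theorem proposition12 (m : nat) (A : 'I_m -> {set 'I_m})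
    (hA : forall i, i \notin A i)
    (b : {set 'I_m} -> nat)
    (hb : forall M : {set 'I_m}, M != set0 -> umcd_output m A M (b M)) :
  beta_PUMCD m b <= beta_PCC m A.
Proof.
rewrite /beta_PUMCD /beta_PCC.
apply: (big_ind2 (fun x y => x <= y)) => //.
  move=> x1 x2 y1 y2 h1 h2; by rewrite leq_min !geq_min h1 h2 orbT.
move=> P hP; apply: leq_sum => M MP.
have nM : M != set0.
  move: hP; rewrite /is_partition /partition => /and3P [_ _ h0].
  by apply/eqP => M0; move: h0; rewrite -M0 MP.
rewrite /beta_MDS.
set dd := \big[minn/#|M|]_(i in M) #|M :&: A i|.
have hd : forall u, u \in M -> dd <= #|A u :&: M|.
  by move=> u uM; rewrite setIC; apply: bigmin_le.
exact: ar6 (@umcd_bound m A hA M dd (b M) hd nM (hb M nM)).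
Qed.
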